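(* Let $\mathcal{A}$ be a linear hyperplane arrangement in $\mathbb{R}^n$, $i\in\{0,\dots,k\}$, $P\in L(\mathcal{A}^{(k-i)})$ and $U\in\mathcal{S}_{i,P}$. Then $$L_U(\mathcal{A})=\{X\in L_{k-i}(\mathcal{A}):P\not\subseteq H(X)\},\qquad \{X\in L_{k-i}(\mathcal{A}):\Delta(U\cap(U^\perp+T^\perp))\in H(X)\}=\{X\in L_{k-i}(\mathcal{A}):P\subseteq H(X)\}.$$ In particular, $L_{U_1}(\mathcal{A})=L_{U_2}(\mathcal{A})$ for all $U_1,U_2\in\mathcal{S}_{i,P}$.
   Context: $T=\bigcap_{H\in\mathcal{A}}H$; $L(\mathcal{A})$ is the intersection lattice (incl. $\mathbb{R}^n$), $L_j(\mathcal{A})$ its elements of codimension $j$. Plücker coordinates $\Delta(W)=(\Delta_I(W))_{I\in\binom{[n]}{d}}$ for a $d$-dimensional $W$ ($\Delta_I$ = minor on columns $I$ of a row-basis matrix, up to scalar). For $X\in L_j(\mathcal{A})$, $H(X)=\{x\in\mathbb{R}^{\binom{[n]}{j}}:\sum_I(-1)^{j(j+1)/2+\sum_{i\in I}i}\Delta_{[n]\setminus I}(X)x_I=0\}$; $\mathcal{A}^{(j)}=\{H(X):X\in L_j(\mathcal{A})\}$. For a flat $P$ of an arrangement $\mathcal{B}$, $P^\circ=P\setminus\bigcup\{Q\in L(\mathcal{B}):Q\subsetneq P\}$. $\mathcal{S}_{i,P}=\{U\in\mathrm{Gr}(k,n):\dim(U\cap T)=i,\ \Delta(U\cap(U^\perp+T^\perp))\in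 P^\circ\}$. For $U$ with $\dim(U\cap T)=i$, $L_U(\mathcal{A})=\{X\in L_{k-i}(\mathcal{A}):X\oplus(U\cap(U^\perp+T^\perp))=\mathbb{R}^n\}$. *)

(* Defs.v *)
(* linear algebra over an ordered field via mxalgebra.
   Vectors of R^n are row vectors 'rV[R]_n; a linear subspace of R^n is
   represented by (the row space of) a square matrix 'M[R]_n. *)
From HB Require Import structures.
From mathcomp Require Import all_boot all_order all_algebra.
Set Implicit Arguments. Unset Strict Implicit. Unset Printing Implicit Defensive.
Import Order.TTheory GRing.Theory Num.Theory.
Local Open Scope ring_scope.

Definition dsub (n d : nat) := {I : {set 'I_n} | #|I| == d}.

(* Minor of a d x n matrix B on the columns I (listed in increasing order). *)
Definition minor (R : comNzRingType) (n d : nat) (B : 'M[R]_(d, n)) (I : dsub n d) : R :=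
  \det (colsub (fun t : 'I_d => enum_val (cast_ord (esym (eqP (valP I))) t)) B).

Lemma dsubC_proof (n j : nat) (I : dsub n j) : #|~: val I| == (n - j)%N.
Proof.
have hI : #|val I| = j := eqP (valP I).
move: (val I) hI => J hJ.
apply/eqP; have := cardsC J; rewrite hJ card_ord => e.
by rewrite -[in RHS]e addKn.
Qed.
Definition dsubC (n j : nat) (I : dsub n j) : dsub n (n - j)%N :=
  exist _ (~: val I) (dsubC_proof I).

(* A d x n matrix whose rows form a basis of the row space of W when
   d = \rank W: it is then literally row_base W (see rbase_row_base). *)
Definition rbase (R : fieldType) (n d : nat) (W : 'M[R]_n) : 'M[R]_(d, n) :=
  pid_mx d *m row_ebase W.
Lemma rbase_row_base (R : fieldType) (n : nat) (W : 'M[R]_n) :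
  rbase (\rank W) W = row_base W.
Proof. by []. Qed.

(* Pluecker coordinate vector Delta(W) in R^{binom([n], d)}, for dim W = d. *)
Definition plucker (R : fieldType) (n d : nat) (W : 'M[R]_n) : dsub n d -> R :=
  minor (rbase d W).
Arguments plucker {R n} d W.
Arguments rbase {R n} d W.

Definition perp (R : fieldType) (n : nat) (W : 'M[R]_n) : 'M[R]_n := kermx W^T.

Definition hyperplane_arrangement (R : fieldType) (n : nat) (A : seq 'M[R]_n) :=
  forall H, H \in A -> \rank H = n.-1.

Definition Tcap (R : fieldType) (n : nat) (A : seq 'M[R]_n) : 'M[R]_n :=
  (\bigcap_(H <- A) H)%MS.

(* X in L(A): X is the intersection of some subfamily of A (empty: R^n) *)
Definition flat (R : fieldType) (n : nat) (A : seq 'M[R]_n) (X : 'M[R]_n) : Prop :=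
  exists s : seq 'M[R]_n, {subset s <= A} /\ (X == \bigcap_(H <- s) H)%MS.

Definition flatj (R : fieldType) (n : nat) (A : seq 'M[R]_n) (j : nat) (X : 'M[R]_n) : Prop :=
  flat A X /\ \rank X = (n - j)%N.
Arguments flatj {R n} A j X.

(* H(X) in R^{binom([n], j)}, for X of codimension j; signs use 1-based indices *)
Definition Hpl (R : fieldType) (n j : nat) (X : 'M[R]_n) : (dsub n j -> R) -> Prop :=
  fun x => \sum_(I : dsub n j)
     (-1) ^+ ((j * j.+1)./2 + \sum_(a in val I) (val a).+1)
       * plucker (n - j)%N X (dsubC I) * x I = 0.
Arguments Hpl {R n} j X x.

(* P in L(A^{(j)}): P is the intersection of H(X) over finitely many X in L_j(A)
   (the empty intersection being the whole space). *)
Definition Pflat (R : fieldType) (n : nat) (A : seq 'M[R]_n) (j : nat)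
  (P : (dsub n j -> R) -> Prop) : Prop :=
  exists s : seq 'M[R]_n, (forall X, X \in s -> flatj A j X) /\
    (forall x, P x <-> (forall X, X \in s -> Hpl j X x)).
Arguments Pflat {R n} A j P.

Definition Pcirc (R : fieldType) (n : nat) (A : seq 'M[R]_n) (j : nat)
  (P : (dsub n j -> R) -> Prop) (x : dsub n j -> R) : Prop :=
  P x /\ forall Q, Pflat A j Q -> (forall y, Q y -> P y) -> (exists y, P y /\ ~ Q y) -> ~ Q x.
Arguments Pcirc {R n} A j P x.

Definition Wsp (R : fieldType) (n : nat) (U T : 'M[R]_n) : 'M[R]_n :=
  (U :&: (perp U + perp T))%MS.

Definition Sset (R : fieldType) (n : nat) (A : seq 'M[R]_n) (k i : nat)
  (P : (dsub n (k - i)%N -> R) -> Prop) (U : 'M[R]_n) : Prop :=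
  [/\ \rank U = k, \rank (U :&: Tcap A)%MS = i &
      Pcirc A (k - i)%N P (plucker (k - i)%N (Wsp U (Tcap A)))].

Definition LU (R : fieldType) (n : nat) (A : seq 'M[R]_n) (U X : 'M[R]_n) : Prop :=
  let W := Wsp U (Tcap A) in
  let k := \rank U in let i := \rank (U :&: Tcap A)%MS in
  [/\ flatj A (k - i)%N X, \rank (X :&: W)%MS = 0%N & \rank (X + W)%MS = n].

(* Main.v *)
Require Import Defs.
From HB Require Import structures.
From mathcomp Require Import all_boot all_order all_algebra.
From mathcomp Require Import zify ring.
From Stdlib Require Import Classical_Prop.
Import Order.TTheory GRing.Theory Num.Theory.
Local Open Scope ring_scope.

Set Implicit Arguments. Unset Strict Implicit. Unset Printing Implicit Defensive.

Definition ordlt n : rel 'I_n := fun x y => (val x < val y)%N.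

Lemma ordlt_trans n : transitive (@ordlt n).
Proof. by move=> x y z; rewrite /ordlt; apply: ltn_trans. Qed.
Lemma ordlt_irr n : irreflexive (@ordlt n).
Proof. by move=> x; rewrite /ordlt ltnn. Qed.

Lemma sorted_enumS n (S : {set 'I_n}) : sorted (@ordlt n) (enum S).
Proof.
rewrite /enum_mem; apply: sorted_filter; first exact: ordlt_trans.
rewrite -enumT.
have := iota_ltn_sorted 0 n; rewrite -val_enum_ord sorted_map.
by [].
Qed.

Lemma enum_lift n (c : 'I_n) (S : {set 'I_n.-1}) :
  enum (lift c @: S) = map (lift c) (enum S).
Proof.
apply: (irr_sorted_eq (@ordlt_trans n) (@ordlt_irr n)).
- exact: sorted_enumS.
- rewrite sorted_map; have := sorted_enumS S; apply: sub_sorted.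
  move=> x y; rewrite /ordlt /= /bump.
  by case: (leqP c x); case: (leqP c y) => /= ? ? ?; rewrite ?addn1 ?add1n ?add0n ?addn0 ?ltnS //; lia.
move=> x; rewrite mem_enum; case: (unliftP c x) => [y ->|->].
  by rewrite mem_imset ?(mem_map lift_inj) ?mem_enum //; apply: lift_inj.
apply/idP/idP.
  by case/imsetP => y _ /eqP; rewrite (negPf (neq_lift _ _)).
by case/mapP => y _ /eqP; rewrite (negPf (neq_lift _ _)).
Qed.

Section MS.
Variable R : comNzRingType.

Definition mS n j (B : 'M[R]_(j, n)) (S : {set 'I_n}) : R :=
  if (insub S : option (dsub n j)) is Some J then minor B J else 0.

Lemma mS_minor n j (B : 'M[R]_(j, n)) (I : dsub n j) : mS B (val I) = minor B I.
Proof. by rewrite /mS valK. Qed.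

Lemma mS0 n j (B : 'M[R]_(j, n)) (S : {set 'I_n}) : #|S| != j -> mS B S = 0.
Proof. by move=> h; rewrite /mS insubF //; apply/negbTE. Qed.

Lemma mSE n j (B : 'M[R]_(j, n)) (S : {set 'I_n}) (x0 : 'I_n) : #|S| = j ->
  mS B S = \det (\matrix_(r, s) B r (nth x0 (enum S) s)).
Proof.
move=> hS; have hS' : #|S| == j by apply/eqP.
rewrite /mS (insubT (fun S : {set 'I_n} => #|S| == j) hS') /minor /=.
congr (\det _); apply/matrixP => r s; rewrite mxE [RHS]mxE.
by rewrite (enum_val_nth x0).
Qed.
End MS.

Lemma enum_setD1 n (S : {set 'I_n}) x : enum (S :\ x) = rem x (enum S).
Proof.
rewrite rem_filter ?enum_uniq // /enum_mem -filter_predI.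
by apply: eq_filter => y /=; rewrite in_setD1.
Qed.

Lemma nth_rem_nth (T : eqType) (x0 : T) (s : seq T) t k :
  uniq s -> (t < size s)%N -> nth x0 (rem (nth x0 s t) s) k = nth x0 s (bump t k).
Proof.
move=> us ht; rewrite remE index_uniq // nth_cat size_take ht.
rewrite /bump; case: (ltnP k t) => hk.
  by rewrite nth_take // add0n.
by rewrite nth_drop add1n addSn subnKC.
Qed.


Lemma mS_expand (R : comNzRingType) N j (B : 'M[R]_(j.+1, N)) (S : {set 'I_N}) :
  #|S| = j.+1 ->
  mS B S = \sum_(c in S) (-1) ^+ (index c (enum S)) * B 0 c * mS (row' 0 B) (S :\ c).
Proof.
move=> hS.
have [x0 _] : exists x0, x0 \in S by apply/card_gt0P; rewrite hS.
rewrite (mSE B x0 hS) (expand_det_row _ ord0).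
have hs : size (enum S) = j.+1 by rewrite -cardE.
rewrite -[in RHS]big_enum [in RHS](big_nth x0) hs [in RHS]big_mkord.
apply: eq_bigr => t _. Time rewrite /cofactor mxE.
have ht : (t < size (enum S))%N by rewrite hs.
rewrite index_uniq ?enum_uniq // add0n.
have hc : nth x0 (enum S) t \in S by rewrite -mem_enum mem_nth.
rewrite (mSE _ x0); last by move: hS; rewrite (cardsD1 (nth x0 (enum S) t)) hc add1n => -[].
rewrite mulrA [B _ _ * _]mulrC; congr (_ * _ * \det _).
apply/matrixP => r s; rewrite !mxE.
rewrite enum_setD1 nth_rem_nth ?enum_uniq //.
Qed.

Lemma mS_0 (R : comNzRingType) n (B : 'M[R]_(0, n)) (S : {set 'I_n}) :
  #|S| = 0%N -> mS B S = 1.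
Proof.
move=> hS; have hS' : #|S| == 0%N by apply/eqP.
by rewrite /mS (insubT (fun S : {set 'I_n} => #|S| == 0%N) hS') /minor det_mx00.
Qed.

Lemma mS_col' (R : comNzRingType) N j (M : 'M[R]_(j, N)) (c : 'I_N) (S : {set 'I_N.-1}) :
  mS (col' c M) S = mS M (lift c @: S).
Proof.
have hc : #|lift c @: S| = #|S| by rewrite card_imset //; apply: lift_inj.
case: (eqVneq #|S| j) => hS; last by rewrite !mS0 ?hc.
case: j M hS => [|j] M hS.
  by rewrite !mS_0 ?hc.
have [x0 _] : exists x0, x0 \in S by apply/card_gt0P; rewrite hS.
rewrite (mSE _ x0) // (mSE _ (lift c x0)) ?hc //.
congr (\det _); apply/matrixP => r s; rewrite !mxE enum_lift (nth_map x0) //.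
by rewrite -cardE hS.
Qed.

Lemma setC_lift n (c : 'I_n) (S : {set 'I_n.-1}) :
  lift c @: (~: S) = ~: (c |: lift c @: S).
Proof.
apply/setP => x; rewrite !inE; case: (unliftP c x) => [y ->|->].
  rewrite !mem_imset ?inE; try exact: lift_inj.
  by rewrite eq_sym (negPf (neq_lift _ _)).
rewrite eqxx /=; apply/imsetP => -[y _ /eqP]; by rewrite (negPf (neq_lift _ _)).
Qed.

Lemma count_sumn (T : Type) (p : pred T) (s : seq T) :
  count p s = (\sum_(z <- s) p z)%N.
Proof. by elim: s => [|a s IH]; rewrite ?big_nil ?big_cons //= IH. Qed.

Lemma index_sorted n (s : seq 'I_n) x : sorted (@ordlt n) s -> x \in s ->
  index x s = count (fun z : 'I_n => (z < x)%N) s.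
Proof.
elim: s => [|y s IH] //= hs.
have ha := order_path_min (@ordlt_trans n) hs.
rewrite inE; case: (eqVneq y x) => [<- _|hyx /= hx].
  rewrite ltnn add0n; apply/esym; rewrite -(count_pred0 s).
  apply: eq_in_count => z hz /=; move/allP: ha => /(_ z hz); rewrite /ordlt.
  by move/ltnW => h; rewrite ltnNge h.
rewrite IH ?(path_sorted hs) //.
by move/allP: ha => /(_ x hx); rewrite /ordlt => ->.
Qed.

Lemma index_enum_sum n (S : {set 'I_n}) x : x \in S ->
  index x (enum S) = (\sum_(z in S) (z < x))%N.
Proof.
move=> hx; rewrite index_sorted ?sorted_enumS ?mem_enum // count_sumn.
by rewrite big_enum.
Qed.

Lemma row'_col_mx (R : Type) j m p (B : 'M[R]_(j.+1, p)) (C : 'M[R]_(m, p)) :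
  row' (lshift m ord0) (col_mx B C) = col_mx (row' 0 B) C :> 'M_(j + m, p).
Proof.
apply/matrixP => r s; rewrite mxE.
case: (splitP r) => [r' hr|r' hr].
  have -> : r = lshift m r' by apply/val_inj.
  have -> : lift (lshift m ord0) (lshift m r') = lshift m (lift ord0 r') :> 'I_(j.+1 + m).
    by apply/val_inj.
  by rewrite !col_mxEu mxE.
have -> : r = rshift j r' by apply/val_inj.
have -> : lift (lshift m ord0) (rshift j r') = rshift j.+1 r' :> 'I_(j.+1 + m).
  by apply/val_inj => /=; rewrite /bump /=; lia.
by rewrite !col_mxEd.
Qed.

Lemma col'_col_mx (R : Type) j m p (B : 'M[R]_(j, p)) (C : 'M[R]_(m, p)) c :
  col' c (col_mx B C) = col_mx (col' c B) (col' c C).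
Proof.
apply/matrixP => r s; rewrite mxE.
case: (splitP r) => [r' hr|r' hr].
  have -> : r = lshift m r' by apply/val_inj.
  by rewrite !col_mxEu mxE.
have -> : r = rshift j r' by apply/val_inj.
by rewrite !col_mxEd mxE.
Qed.

Lemma notin_lift n (c : 'I_n) (S : {set 'I_n.-1}) : c \notin lift c @: S.
Proof. by apply/imsetP => -[y _ /eqP]; rewrite (negPf (neq_lift _ _)). Qed.

Lemma card_hS n (c : 'I_n) (S : {set 'I_n.-1}) : #|c |: lift c @: S| = #|S|.+1.
Proof. by rewrite cardsU1 notin_lift card_imset //; apply: lift_inj. Qed.

Lemma pre_hS n (c : 'I_n) (S : {set 'I_n.-1}) : [set y | lift c y \in c |: lift c @: S] = S.
Proof.
apply/setP => y; rewrite inE in_setU1 mem_imset; last exact: lift_inj.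
by rewrite eq_sym (negPf (neq_lift _ _)).
Qed.

Lemma hS_pre n (c : 'I_n) (S : {set 'I_n}) : c \in S -> c |: lift c @: [set y | lift c y \in S] = S.
Proof.
move=> hc; apply/setP => x; rewrite in_setU1; case: (unliftP c x) => [y ->|->].
  rewrite eq_sym (negPf (neq_lift _ _)) /= mem_imset ?inE //; exact: lift_inj.
by rewrite eqxx.
Qed.

Lemma sum_hS n (c : 'I_n) (S : {set 'I_n.-1}) :
  (\sum_(a in c |: lift c @: S) val a = c + \sum_(y in S) val y + \sum_(y in S) (c <= y))%N.
Proof.
rewrite big_setU1 ?notin_lift //= big_imset /=; last by move=> x y _ _; apply: lift_inj.
rewrite -addnA; congr (_ + _)%N; rewrite addnC -big_split /=.
by apply: eq_bigr => y _; rewrite /bump.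
Qed.

Lemma idx_hS n (c : 'I_n) (S : {set 'I_n.-1}) :
  index c (enum (c |: lift c @: S)) = (\sum_(y in S) (y < c))%N.
Proof.
rewrite index_enum_sum ?setU11 // big_setU1 ?notin_lift //= ltnn add0n.
rewrite big_imset /=; last by move=> x y _ _; apply: lift_inj.
by apply: eq_bigr => y _; rewrite /bump; case: (leqP c y) => h; lia.
Qed.

Lemma count_split n (c : 'I_n) (S : {set 'I_n.-1}) :
  (\sum_(y in S) (c <= y) + \sum_(y in S) (y < c))%N = #|S|.
Proof.
rewrite -big_split /= -sum1_card; apply: eq_bigr => y _.
by case: (leqP c y) => h; lia.
Qed.

Lemma sign_hS (R : comNzRingType) n j (c : 'I_n) (S : {set 'I_n.-1}) : #|S| = j ->
  (-1) ^+ ((\sum_(a in c |: lift c @: S) val a)%N + 'C(j.+1, 2)) *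
  (-1) ^+ (index c (enum (c |: lift c @: S))) =
  (-1) ^+ (val c) * (-1) ^+ ((\sum_(a in S) val a)%N + 'C(j, 2)) :> R.
Proof.
move=> hS; rewrite -!exprD sum_hS idx_hS binS bin1.
have := count_split c S; rewrite hS => hc.
set u := (\sum_(y in S) (c <= y))%N in hc *.
set v := (\sum_(y in S) (y < c))%N in hc *.
set w := (\sum_(y in S) val y)%N.
have -> : (c + w + u + ('C(j, 2) + j) + v = (c + (w + 'C(j, 2))) + j.*2)%N by lia.
by rewrite exprD -mul2n exprM expr2 mulrNN mulr1 expr1n mulr1.
Qed.

Lemma term_eq (R : comNzRingType) n j (c : 'I_n) (S : {set 'I_n.-1}) (b Y : R)
  (M : 'M[R]_(j, n)) : #|S| = j ->
  b * (-1) ^+ c * ((-1) ^+ ((\sum_(a in S) val a)%N + 'C(j, 2)) * mS M (lift c @: S) * Y) =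
  (-1) ^+ ((\sum_(a in c |: lift c @: S) val a)%N + 'C(j.+1, 2)) *
  ((-1) ^+ (index c (enum (c |: lift c @: S))) * b * mS M ((c |: lift c @: S) :\ c)) * Y.
Proof.
move=> hS; rewrite setU1K ?notin_lift //.
have e := sign_hS R c hS.
transitivity (((-1) ^+ ((\sum_(a in c |: lift c @: S) val a)%N + 'C(j.+1, 2)) *
  (-1) ^+ (index c (enum (c |: lift c @: S)))) * (b * mS M (lift c @: S) * Y)).
  by rewrite e; ring.
ring.
Qed.

Lemma laplace (R : comNzRingType) j m (B : 'M[R]_(j, j + m)) (C : 'M[R]_(m, j + m)) :
  \det (col_mx B C) = \sum_(S : {set 'I_(j + m)} | #|S| == j)
   (-1) ^+ ((\sum_(a in S) val a)%N + 'C(j, 2)) * mS B S * mS C (~: S).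
Proof.
elim: j B C => [|j IH] B C.
  rewrite (big_pred1 set0); last by move=> S; rewrite cards_eq0.
  rewrite big_set0 /= mul1r setC0.
  rewrite mS_0 ?cards0 // mul1r.
  have -> : col_mx B C = C.
    apply/matrixP => i k.
    have e : i = rshift 0 (i : 'I_m) :> 'I_(0 + m) by apply/val_inj.
    by rewrite {1}e col_mxEd.
  case: m B C => [|m] B C; first by rewrite mS_0 ?cardsT ?card_ord // det_mx00.
  rewrite (mSE C ord0) ?cardsT ?card_ord //.
  congr (\det _); apply/matrixP => r s; rewrite mxE.
  by rewrite enum_setT -enumT nth_ord_enum.
rewrite (expand_det_row _ (lshift m ord0)).
transitivity (\sum_(c : 'I_(j.+1 + m)) \sum_(S' : {set 'I_(j + m)} | #|S'| == j)
   (B 0 c * (-1) ^+ (val c) * ((-1) ^+ ((\sum_(a in S') val a)%N + 'C(j, 2)) *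
     mS (row' 0 B) (lift c @: S') * mS C (~: (c |: lift c @: S'))))).
  apply: eq_bigr => c _.
  rewrite col_mxEu /cofactor col'_col_mx.
  rewrite row'_col_mx IH big_distrr big_distrr /=; apply: eq_bigr => S' _.
  have -> : row' 0 (col' c B) = col' c (row' 0 B) by apply/matrixP => r s; rewrite !mxE.
  rewrite (mS_col' (row' 0 B) c S') (mS_col' C c (~: S')) setC_lift add0n.
  by rewrite mulrA.
have -> : \sum_(S : {set 'I_(j.+1 + m)} | #|S| == j.+1)
    (-1) ^+ ((\sum_(a in S) val a)%N + 'C(j.+1, 2)) * mS B S * mS C (~: S) =
  \sum_(S : {set 'I_(j.+1 + m)} | #|S| == j.+1) \sum_(c in S)
    (-1) ^+ ((\sum_(a in S) val a)%N + 'C(j.+1, 2)) *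
    ((-1) ^+ (index c (enum S)) * B 0 c * mS (row' 0 B) (S :\ c)) * mS C (~: S).
  apply: eq_bigr => S /eqP hS.
  by rewrite (mS_expand _ hS) big_distrr big_distrl.
rewrite [RHS](exchange_big_dep xpredT) //=; apply: eq_big => // c _.
rewrite (reindex_onto (fun S' : {set 'I_(j + m)} => c |: lift c @: S')
                      (fun S => [set y | lift c y \in S])) /=; last first.
  by move=> S /andP [_ hc]; apply: hS_pre.
apply: eq_big => [S'|S' hS'].
  by rewrite (card_hS c S') (pre_hS c S') setU11 eqxx andbT eqSS andbT.
have h := @term_eq R (j.+1 + m) j c S' (B 0 c) (mS C (~: (c |: lift c @: S'))) (row' 0 B) (eqP hS').
exact h.
Qed.

Lemma sum_dsub (R : comNzRingType) n j (G : {set 'I_n} -> R) :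
  \sum_(I : dsub n j) G (val I) = \sum_(S : {set 'I_n} | #|S| == j) G S.
Proof. symmetry; exact: (big_sub (fun S : {set 'I_n} => #|S| == j) G). Qed.

Lemma laplace_gen (R : comNzRingType) n j m (e : (j + m = n)%N)
  (B : 'M[R]_(j, n)) (C : 'M[R]_(m, n)) :
  \det (castmx (e, erefl n) (col_mx B C)) = \sum_(S : {set 'I_n} | #|S| == j)
   (-1) ^+ ((\sum_(a in S) val a)%N + 'C(j, 2)) * mS B S * mS C (~: S).
Proof. subst n; rewrite castmx_id; exact: laplace. Qed.

Lemma rank_castmx (F : fieldType) m m' n (e : m = m') (A : 'M[F]_(m, n)) :
  \rank (castmx (e, erefl n) A) = \rank A.
Proof. by subst m'; rewrite castmx_id. Qed.

Lemma rbase_eq (F : fieldType) n d (W : 'M[F]_n) : \rank W = d -> (rbase d W :=: W)%MS.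
Proof. by move=> <-; exact: eq_row_base. Qed.

Lemma Hpl_sum (F : fieldType) n j (X W : 'M[F]_n) (hj : (j <= n)%N) :
  \sum_(I : dsub n j)
     (-1) ^+ ((j * j.+1)./2 + \sum_(a in val I) (val a).+1)
       * plucker (n - j)%N X (dsubC I) * plucker j W I =
  \det (castmx (subnKC hj, erefl n) (col_mx (rbase j W) (rbase (n - j) X))).
Proof.
rewrite laplace_gen -sum_dsub; apply: eq_bigr => I _.
rewrite /plucker -!mS_minor /=.
have hI : #|val I| = j by apply/eqP; exact: (valP I).
have -> : ((j * j.+1)./2 + \sum_(a in val I) (val a).+1 =
           ((\sum_(a in val I) val a) + 'C(j, 2)) + j.*2)%N.
  have -> : ((j * j.+1)./2 = 'C(j.+1, 2))%N by rewrite bin2 mulnC.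
  rewrite binS bin1.
  have -> : (\sum_(a in val I) (val a).+1 = \sum_(a in val I) val a + #|val I|)%N.
    by rewrite -sum1_card -big_split /=; apply: eq_bigr => a _; rewrite addn1.
  rewrite hI; lia.
rewrite exprD -mul2n exprM expr2 mulrNN mulr1 expr1n mulr1.
ring.
Qed.

Lemma key (F : fieldType) n j (W X : 'M[F]_n) : \rank W = j -> \rank X = (n - j)%N ->
  Hpl j X (plucker j W) <-> \rank (X + W)%MS != n.
Proof.
move=> hW hX.
have hj : (j <= n)%N by rewrite -hW rank_leq_col.
rewrite /Hpl (Hpl_sum X W hj).
set M := castmx _ _.
have hr : \rank M = \rank (X + W)%MS.
  rewrite /M rank_castmx.
  have e1 : (rbase j W + rbase (n - j) X == col_mx (rbase j W) (rbase (n - j) X))%MS.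
    by apply/eqmxP; exact: addsmxE.
  rewrite -(eqmx_rank e1) addsmxC.
  apply/eqmx_rank/eqmxP; apply: adds_eqmx; exact: rbase_eq.
have hd : (\det M != 0) = (\rank M == n).
  by rewrite -unitfE -unitmxE -row_free_unit.
rewrite -hr -hd; split; [by move=> ->; rewrite eqxx | by move/negPn/eqP].
Qed.

Section Perp.
Variable F : fieldType.
Variable n : nat.
Implicit Types A B M V : 'M[F]_n.

Lemma perp_sym M A : (M <= perp A)%MS = (A <= perp M)%MS.
Proof.
rewrite /perp !sub_kermx.
by rewrite -(inj_eq trmx_inj) trmx_mul trmxK trmx0.
Qed.

Lemma rank_perp A : \rank (perp A) = (n - \rank A)%N.
Proof. by rewrite /perp mxrank_ker mxrank_tr. Qed.

Lemma perp_perp A : (A <= perp (perp A))%MS.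
Proof. by rewrite -perp_sym submx_refl. Qed.

Lemma perp_anti A B : (A <= B)%MS -> (perp B <= perp A)%MS.
Proof. by move=> h; rewrite perp_sym (submx_trans h) ?perp_perp. Qed.

Lemma perp_cap A B : (perp A :&: perp B <= perp (A + B)%MS)%MS.
Proof.
rewrite perp_sym addsmx_sub -!(perp_sym (perp A :&: perp B)%MS).
by rewrite capmxSl capmxSr.
Qed.

Lemma perp_capE A B : (perp A :&: perp B == perp (A + B)%MS)%MS.
Proof.
apply/andP; split; first exact: perp_cap.
by rewrite sub_capmx !perp_anti ?addsmxSl ?addsmxSr.
Qed.

Lemma rank_perp_sum A B :
  \rank (perp A + perp B)%MS = (n - \rank (A :&: B))%N.
Proof.
have h1 := mxrank_sum_cap (perp A) (perp B).
have h2 := mxrank_sum_cap A B.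
rewrite (eqmx_rank (perp_capE A B)) !rank_perp in h1.
have := rank_leq_col (A + B)%MS; have := rank_leq_col A; have := rank_leq_col B.
have := rank_leq_col (A :&: B)%MS.
lia.
Qed.

End Perp.

Lemma cap_perp0 (F : realFieldType) n (V : 'M[F]_n) : \rank (V :&: perp V)%MS = 0%N.
Proof.
set M := (V :&: perp V)%MS.
have hM : (M <= perp M)%MS.
  apply: (submx_trans (capmxSl V (perp V))).
  by rewrite -perp_sym capmxSr.
have -> : M = 0; last by rewrite mxrank0.
move: hM; rewrite /perp sub_kermx => /eqP hM.
apply/matrixP => r k; rewrite mxE.
have := congr1 (fun Z : 'M[F]_n => Z r r) hM; rewrite !mxE => /psumr_eq0P h.
have h0 : forall i : 'I_n, true -> 0 <= M r i * M^T i r.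
  by move=> i _; rewrite mxE -expr2 sqr_ge0.
by have := h h0 k isT; rewrite mxE => /eqP; rewrite mulf_eq0 orbb => /eqP.
Qed.

Lemma rank_Wsp (F : realFieldType) n (U T : 'M[F]_n) :
  \rank (Wsp U T) = (\rank U - \rank (U :&: T)%MS)%N.
Proof.
set V := (U :&: T)%MS.
have h1 : (perp U + perp T <= perp V)%MS.
  by rewrite addsmx_sub !perp_anti ?capmxSl ?capmxSr.
have h2 := rank_perp_sum U T.
have h3 : (perp U + perp T == perp V)%MS.
  by rewrite -(mxrank_leqif_eq h1).2 h2 rank_perp.
have -> : \rank (Wsp U T) = \rank (U :&: perp V)%MS.
  apply/eqmx_rank/eqmxP; apply: cap_eqmx; [exact: eqmx_refl | exact/eqmxP].
have h4 := mxrank_sum_cap U (perp V); rewrite rank_perp in h4.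
have h5 := mxrank_sum_cap V (perp V); rewrite rank_perp cap_perp0 in h5.
have h6 : (\rank (V + perp V)%MS <= \rank (U + perp V)%MS)%N.
  by apply: mxrankS; apply: addsmxS; [exact: capmxSl | exact: submx_refl].
have h7 := rank_leq_col (U + perp V)%MS.
have h8 := rank_leq_col V.
have h9 : (\rank V <= \rank U)%N by apply: mxrankS; exact: capmxSl.
lia.
Qed.

Lemma part2 (R : realFieldType) (n k i : nat) (A : seq 'M[R]_n)
  (P : (dsub n (k - i) -> R) -> Prop) (U : 'M[R]_n) :
  Pflat A (k - i) P -> Sset A P U ->
  forall X, flatj A (k - i) X ->
  (Hpl (k - i) X (plucker (k - i) (Wsp U (Tcap A))) <->
   (forall x, P x -> Hpl (k - i) X x)).
Proof.
move=> [s [hs hPs]] [hU hUT [hPW hmin]] X hX; split; last by move=> h; apply: h.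
move=> hH; case: (classic (forall x, P x -> Hpl (k - i) X x)) => [//|hn].
exfalso.
have [y [Py nHy]] : exists y, P y /\ ~ Hpl (k - i) X y.
  apply: NNPP => hn'; apply: hn => x Px; apply: NNPP => hx; apply: hn'; by exists x.
apply: (hmin (fun y => P y /\ Hpl (k - i) X y)).
- exists (X :: s); split.
    by move=> X'; rewrite inE => /orP [/eqP -> //|]; apply: hs.
  move=> x; split.
    move=> [Px Hx] X'; rewrite inE => /orP [/eqP -> //|]; exact: (proj1 (hPs x) Px).
  move=> h; split; last by apply: h; rewrite inE eqxx.
  by apply: (proj2 (hPs x)) => X' hX'; apply: h; rewrite inE hX' orbT.
- by move=> y' [].
- by exists y; split => // -[].
- by split.
Qed.

Lemma part1 (R : realFieldType) (n k i : nat) (A : seq 'M[R]_n)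
  (P : (dsub n (k - i) -> R) -> Prop) (U : 'M[R]_n) :
  Pflat A (k - i) P -> Sset A P U ->
  forall X, LU A U X <-> flatj A (k - i) X /\ ~ (forall x, P x -> Hpl (k - i) X x).
Proof.
move=> hP hS X; have hS' := hS; case: hS' => hU hUT _.
have hW : \rank (Wsp U (Tcap A)) = (k - i)%N by rewrite rank_Wsp hU hUT.
have hj : (k - i <= n)%N by rewrite -hW rank_leq_col.
rewrite /LU hU hUT; split.
  case=> hX hcap hsum; split => // hall.
  have := (part2 hP hS hX).2 hall.
  case: hX => _ hX; move/(key hW hX); by rewrite hsum eqxx.
case=> hX hn.
have hsum : \rank (X + Wsp U (Tcap A))%MS = n.
  case: (eqVneq (\rank (X + Wsp U (Tcap A))%MS) n) => // hne.
  exfalso; apply: hn; apply/(part2 hP hS hX).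
  case: hX => _ hX; exact/(key hW hX).
split => //.
have := mxrank_sum_cap X (Wsp U (Tcap A)); case: hX => _ hX.
rewrite hsum hX hW; lia.
Qed.

Unset Implicit Arguments.

Theorem mainTheorem8 (R : realFieldType) (n k i : nat) (A : seq 'M[R]_n)
  (P : (dsub n (k - i) -> R) -> Prop) (U : 'M[R]_n) :
  hyperplane_arrangement A -> (i <= k)%N -> Pflat A (k - i) P -> Sset A P U ->
  [/\ (forall X, LU A U X <->
        flatj A (k - i) X /\ ~ (forall x, P x -> Hpl (k - i) X x)),
      (forall X, (flatj A (k - i) X /\
                  Hpl (k - i) X (plucker (k - i) (Wsp U (Tcap A)))) <->
        (flatj A (k - i) X /\ (forall x, P x -> Hpl (k - i) X x))) &
      (forall U1 U2 : 'M[R]_n, Sset A P U1 -> Sset A P U2 ->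
        forall X, LU A U1 X <-> LU A U2 X)].
Proof.
move=> _ _ hP hS; split.
- exact: part1 hP hS.
- move=> X; split; case=> hX h; split => //; by apply/(part2 hP hS hX).
- move=> U1 U2 h1 h2 X; rewrite (part1 hP h1) (part1 hP h2); by [].
Qed.
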